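(* Assume the standing setting in the context, and assume that for every $\boldsymbol a\in\mathrm{Dom}(\boldsymbol A)$, $\Pr^+_\Omega(h(\boldsymbol x)\mid s_1,\boldsymbol a)\ge \Pr^+_\Omega(h(\boldsymbol x)\mid s_0,\boldsymbol a)$. Let $\boldsymbol U\subseteq \boldsymbol X\cup\{Y\}$ be any set of variables such that, under $\Omega$, $(\boldsymbol X\perp\!\!\!\perp C\mid S,\boldsymbol A,\boldsymbol U)$, and assume $\Omega(S=s,\boldsymbol A=\boldsymbol a,\boldsymbol U=\boldsymbol u, C=1)>0$ for all $s,\boldsymbol a,\boldsymbol u$. Then $$0\le \digamma(\Omega)\le \frac{1}{|\mathrm{Dom}(\boldsymbol A)|}\sum_{\boldsymbol a\in\mathrm{Dom}(\boldsymbol A)}\Big(\max_{\boldsymbol u\in\mathrm{Dom}(\boldsymbol U)}\Pr^+_\Delta(h(\boldsymbol x)\mid s_1,\boldsymbol a,\boldsymbol u)-\min_{\boldsymbol u\in\mathrm{Dom}(\boldsymbol U)}\Pr^+_\Delta(h(\boldsymbol x)\mid s_0,\boldsymbol a,\boldsymbol u)\Big).$$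
   Context: Standing setting. All variables have finite domains. $\boldsymbol X=(X_1,\dots,X_n)$ is a vector of features, $Y\in\{0,1\}$ is the label, and $C\in\{0,1\}$ is a selection indicator. $\Omega$ is a joint distribution of $(\boldsymbol X,Y,C)$; its marginal on $(\boldsymbol X,Y)$ is the target population. The biased distribution is $\Delta(\boldsymbol x,y)=\Omega(\boldsymbol x,y\mid C=1)$. A protected attribute $S$ is one of the features, with $\mathrm{Dom}(S)=\{s_0,s_1\}$. A set of admissible attributes $\boldsymbol A\subseteq \boldsymbol X\cup\{Y\}$ with $S\notin\boldsymbol A$ is fixed. A classifier is a function $h:\mathrm{Dom}(\boldsymbol X)\to\{0,1\}$. For a distribution $P$ and an event $E$, write $\Pr^+_P(h(\boldsymbol x)\mid E)=P(h(\boldsymbol X)=1\mid E)$; conditioning on $s,\boldsymbol a,\boldsymbol u$ means conditioning on $S=s,\boldsymbol A=\boldsymbol a,\boldsymbol U=\boldsymbol u$. The fairness query of $h$ on $P$ is $$\digamma(P)=\frac{1}{|\mathrm{Dom}(\boldsymbol A)|}\sum_{\boldsymbol a\in\mathrm{Dom}(\boldsymbol A)}\Big|\Pr^+_P(h(\boldsymbol x)\mid S=s_1,\boldsymbol A=\boldsymbol a)-\Pr^+_P(h(\boldsymbol x)\mid S=s_0,\boldsymbol A=\boldsymbol a)\Big|.$$ *)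

(* Defs.v *)
From HB Require Import structures.
From mathcomp Require Import all_boot all_order all_algebra.
Set Implicit Arguments. Unset Strict Implicit. Unset Printing Implicit Defensive.
Import Order.TTheory GRing.Theory Num.Theory.
Local Open Scope ring_scope.

Definition Pr (R : numFieldType) (T : finType) (P : T -> R) (E : pred T) : R :=
  \sum_(t | E t) P t.

Definition condP (R : numFieldType) (T : finType) (P : T -> R) (E F : pred T) : R :=
  Pr P (predI E F) / Pr P F.

Definition is_dist (R : numFieldType) (T : finType) (P : T -> R) : Prop :=
  (forall t, 0 <= P t) /\ \sum_t P t = 1.

Definition cond_indep (R : numFieldType) (T : finType) (T1 T2 T3 : eqType)
  (P : T -> R) (X : T -> T1) (Y : T -> T2) (Z : T -> T3) : Prop :=
  forall x y z, 0 < Pr P (fun t => Z t == z) ->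
    condP P (fun t => (X t == x) && (Y t == y)) (fun t => Z t == z)
    = condP P (fun t => X t == x) (fun t => Z t == z)
      * condP P (fun t => Y t == y) (fun t => Z t == z).

Definition fmax (R : realDomainType) (T : finType) (f : T -> R) : R :=
  match [pick u : T] with Some u0 => \big[Num.max/f u0]_u f u | None => 0 end.
Definition fmin (R : realDomainType) (T : finType) (f : T -> R) : R :=
  match [pick u : T] with Some u0 => \big[Num.min/f u0]_u f u | None => 0 end.

(* Variables are indexed by option 'I_n : Some i = X_i, None = Y.
   Feature X_i has finite domain D i; Y has domain bool. *)
Section Vars.
Variables (n : nat) (D : 'I_n -> finType).

Definition vdom (v : option 'I_n) : finType :=
  match v with Some i => D i | None => bool end.

Definition XT : finType := {dffun forall i : 'I_n, D i}.
Definition pt : finType := (XT * bool)%type.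

Definition val_of (v : option 'I_n) (w : pt) : vdom v :=
  match v return vdom v with Some i => w.1 i | None => w.2 end.

Definition ifT (b : bool) (T : finType) : finType := if b then T else unit.

(* Dom(A) for a set A of variables: assignments of a value to each v \in A *)
Definition DomV (A : {set option 'I_n}) : finType :=
  {dffun forall v : option 'I_n, ifT (v \in A) (vdom v)}.

Definition projV (A : {set option 'I_n}) (w : pt) : DomV A :=
  [ffun v => match v \in A as b return ifT b (vdom v) with
             | true => val_of v w | false => tt end].

Definition ev_sa (iS : 'I_n) (s : D iS) (A : {set option 'I_n}) (a : DomV A)
  : pred pt := fun w => (w.1 iS == s) && (projV A w == a).
Definition ev_sau (iS : 'I_n) (s : D iS) (A U : {set option 'I_n})
  (a : DomV A) (u : DomV U) : pred pt :=
  fun w => [&& w.1 iS == s, projV A w == a & projV U w == u].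

Definition ev_h (h : XT -> bool) : pred pt := fun w => h w.1.

(* marginal of Omega on (X, Y): the target population *)
Definition margXY (R : numFieldType) (Om : pt * bool -> R) : pt -> R :=
  fun w => Pr Om (fun t => t.1 == w).

(* biased distribution Delta(x,y) = Omega(x,y | C = 1) *)
Definition Delta (R : numFieldType) (Om : pt * bool -> R) : pt -> R :=
  fun w => condP Om (fun t => t.1 == w) (fun t => t.2).

Definition fairness (R : realFieldType) (P : pt -> R) (h : XT -> bool)
  (iS : 'I_n) (s0 s1 : D iS) (A : {set option 'I_n}) : R :=
  (#|{: DomV A}|%:R)^-1 *
  \sum_(a : DomV A) `| condP P (ev_h h) (ev_sa s1 a) - condP P (ev_h h) (ev_sa s0 a) |.

End Vars.

(* Main.v *)
Require Import Defs.
From HB Require Import structures.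
From mathcomp Require Import all_boot all_order all_algebra.
From mathcomp Require Import ring.
Import Order.TTheory GRing.Theory Num.Theory.
Local Open Scope ring_scope.

Section Aux.
Variable R : realFieldType.

Lemma Pr_ext (T : finType) (P : T -> R) (E F : pred T) :
  (forall t, E t = F t) -> Pr P E = Pr P F.
Proof. by move=> EF; rewrite /Pr; apply: eq_bigl. Qed.

Lemma Pr_ge0 (T : finType) (P : T -> R) (E : pred T) :
  (forall t, 0 <= P t) -> 0 <= Pr P E.
Proof. by move=> P0; rewrite /Pr; apply: sumr_ge0. Qed.

Lemma Pr_sub (T : finType) (P : T -> R) (E F : pred T) :
  (forall t, 0 <= P t) -> (forall t, E t -> F t) -> Pr P E <= Pr P F.
Proof.
move=> P0 EF; rewrite /Pr [X in X <= _]big_mkcond [X in _ <= X]big_mkcond /=.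
apply: ler_sum => t _.
case: (boolP (E t)) => Et; first by rewrite (EF _ Et).
by case: (F t).
Qed.

Lemma Pr_part (T J : finType) (P : T -> R) (f : T -> J) (Q : pred J) (G : pred T) :
  \sum_(j | Q j) Pr P (fun t => (f t == j) && G t) = Pr P (fun t => Q (f t) && G t).
Proof.
rewrite /Pr [RHS](partition_big f Q) /=; last by move=> t /andP[].
apply: eq_bigr => j Qj; apply: eq_bigl => t.
by case: eqP => [->|_]; rewrite ?Qj ?andbF ?andbT.
Qed.

Lemma le_fmax (T : finType) (f : T -> R) u : f u <= fmax f.
Proof.
rewrite /fmax; case: pickP => [u0 _|/(_ u)//].
have : u \in index_enum T by rewrite mem_index_enum.
elim: (index_enum T) => // v r IH; rewrite inE big_cons => /orP [/eqP->|/IH H].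
  by rewrite le_max lexx.
by rewrite le_max H orbT.
Qed.

Lemma ge_fmin (T : finType) (f : T -> R) u : fmin f <= f u.
Proof.
rewrite /fmin; case: pickP => [u0 _|/(_ u)//].
have : u \in index_enum T by rewrite mem_index_enum.
elim: (index_enum T) => // v r IH; rewrite inE big_cons => /orP [/eqP->|/IH H].
  by rewrite ge_min lexx.
by rewrite ge_min H orbT.
Qed.

Lemma convex_bd (T : finType) (q w N : T -> R) :
  (forall u, 0 <= w u) -> (forall u, N u = q u * w u) -> 0 < \sum_u w u ->
  fmin q <= (\sum_u N u) / (\sum_u w u) <= fmax q.
Proof.
move=> w0 Nq Sp; apply/andP; split.
  rewrite ler_pdivlMr // mulr_sumr; apply: ler_sum => u _.
  by rewrite Nq; apply: ler_wpM2r => //; apply: ge_fmin.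
rewrite ler_pdivrMr // mulr_sumr; apply: ler_sum => u _.
by rewrite Nq; apply: ler_wpM2r => //; apply: le_fmax.
Qed.

End Aux.
Arguments Pr_ext {R T} P E F _.
Arguments Pr_part {R T J} P f Q G.
Arguments Pr_ge0 {R T} P E _.
Arguments Pr_sub {R T} P E F _ _.
Arguments convex_bd {R T} q w N _ _ _.
Arguments le_fmax {R T} f u.
Arguments ge_fmin {R T} f u.

Theorem proposition2 (R : realFieldType) (n : nat) (D : 'I_n -> finType)
  (Om : pt D * bool -> R) (HOm : is_dist Om)
  (iS : 'I_n) (s0 s1 : D iS) (Hs01 : s0 != s1)
  (HdomS : forall s : D iS, s = s0 \/ s = s1)
  (A : {set option 'I_n}) (HA : Some iS \notin A)
  (h : XT D -> bool)
  (Hmon : forall a : DomV D A,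
     condP (margXY Om) (ev_h h) (ev_sa s0 a)
       <= condP (margXY Om) (ev_h h) (ev_sa s1 a))
  (U : {set option 'I_n})
  (Hci : cond_indep Om (fun t : pt D * bool => t.1.1) (fun t => t.2)
           (fun t => (t.1.1 iS, projV A t.1, projV U t.1)))
  (Hpos : forall (s : D iS) (a : DomV D A) (u : DomV D U),
     0 < Pr Om (fun t => ev_sau s a u t.1 && t.2)) :
  0 <= fairness (margXY Om) h s0 s1 A /\
  fairness (margXY Om) h s0 s1 A <=
    (#|{: DomV D A}|%:R)^-1 *
    \sum_(a : DomV D A)
      (fmax (fun u : DomV D U => condP (Delta Om) (ev_h h) (ev_sau s1 a u))
       - fmin (fun u : DomV D U => condP (Delta Om) (ev_h h) (ev_sau s0 a u))).
Proof.
case: HOm => Om0 Om1.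
pose Zev := fun (s : D iS) (a : DomV D A) (u : DomV D U) (t : pt D * bool) => ev_sau s a u t.1.
have Pmarg : forall E : pred (pt D), Pr (margXY Om) E = Pr Om (fun t => E t.1).
  move=> E; rewrite (Pr_ext Om _ (fun t => E t.1 && predT t)); last by move=> t; rewrite andbT.
  rewrite -(Pr_part Om (fun t => t.1) E predT) /Pr /margXY.
  by apply: eq_bigr => w _; apply: eq_bigl => t; rewrite andbT.
have PDelta : forall E : pred (pt D),
    Pr (Delta Om) E = Pr Om (fun t => E t.1 && t.2) / Pr Om (fun t => t.2).
  move=> E; rewrite -(Pr_part Om (fun t => t.1) E (fun t => t.2)) /Pr /Delta /condP /Pr mulr_suml.
  by apply: eq_bigr => w _; congr (_ / _).
have HZ : forall s a u (t : pt D * bool),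
    ((t.1.1 iS, projV A t.1, projV U t.1) == (s, a, u)) = Zev s a u t.
  by move=> s a u t; rewrite /Zev /ev_sau !xpair_eqE andbA.
have Hq : forall s a u,
   Pr Om (fun t => (ev_h h t.1 && ev_sau s a u t.1) && t.2) * Pr Om (Zev s a u)
   = Pr Om (fun t => h t.1.1 && Zev s a u t) * Pr Om (fun t => ev_sau s a u t.1 && t.2).
  move=> s a u.
  have PzP : 0 < Pr Om (Zev s a u).
    apply: (lt_le_trans (Hpos s a u)); apply: Pr_sub => // t; rewrite /Zev => /andP[] //.
  have nz : Pr Om (Zev s a u) != 0 by rewrite gt_eqF.
  have E1 x : Pr Om (fun t => (t.1.1 == x) && (ev_sau s a u t.1 && t.2)) * Pr Om (Zev s a u)
     = Pr Om (fun t => (t.1.1 == x) && Zev s a u t) * Pr Om (fun t => ev_sau s a u t.1 && t.2).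
    have e0 : Pr Om (fun t : pt D * bool => (t.1.1 iS, projV A t.1, projV U t.1) == (s, a, u))
       = Pr Om (Zev s a u) by apply: Pr_ext => t; exact: HZ.
    have H := Hci x true (s, a, u) ltac:(by rewrite e0).
    rewrite /condP e0 in H.
    have e1 : Pr Om (predI (fun t : pt D * bool => (t.1.1 == x) && (t.2 == true))
        (fun t : pt D * bool => (t.1.1 iS, projV A t.1, projV U t.1) == (s, a, u)))
        = Pr Om (fun t => (t.1.1 == x) && (ev_sau s a u t.1 && t.2)).
      apply: Pr_ext => t /=; rewrite HZ /Zev eqb_id.
      by case: (t.1.1 == x); case: (t.2); case: (ev_sau s a u t.1).
    have e2 : Pr Om (predI (fun t : pt D * bool => (t.1.1 == x))
        (fun t : pt D * bool => (t.1.1 iS, projV A t.1, projV U t.1) == (s, a, u)))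
        = Pr Om (fun t => (t.1.1 == x) && Zev s a u t).
      by apply: Pr_ext => t /=; rewrite HZ.
    have e3 : Pr Om (predI (fun t : pt D * bool => (t.2 == true))
        (fun t : pt D * bool => (t.1.1 iS, projV A t.1, projV U t.1) == (s, a, u)))
        = Pr Om (fun t => ev_sau s a u t.1 && t.2).
      apply: Pr_ext => t /=; rewrite HZ /Zev eqb_id.
      by case: (t.2); case: (ev_sau s a u t.1).
    rewrite e1 e2 e3 in H.
    move: H.
    set a1 := Pr Om _. set b1 := Pr Om _. set c1 := Pr Om _. set z := Pr Om _.
    move=> H; transitivity (a1 / b1 * b1 * b1); first by field.
    by rewrite H; field.
  rewrite (Pr_ext Om _ (fun t => h t.1.1 && (ev_sau s a u t.1 && t.2))); last first.
    by move=> t; rewrite andbA.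
  rewrite -(Pr_part Om (fun t => t.1.1) h (fun t => ev_sau s a u t.1 && t.2)).
  rewrite -(Pr_part Om (fun t => t.1.1) h (Zev s a u)) !mulr_suml.
  by apply: eq_bigr => x _; apply: E1.
have Hsplit : forall (s : D iS) (a : DomV D A) (G : pred (pt D * bool)),
    Pr Om (fun t => G t && ev_sa s a t.1) = \sum_u Pr Om (fun t => G t && Zev s a u t).
  move=> s a G.
  rewrite (Pr_ext Om _ (fun t => xpredT (projV U t.1) && (G t && ev_sa s a t.1))) //.
  rewrite -(Pr_part Om (fun t => projV U t.1) xpredT).
  apply: eq_bigr => u _; apply: Pr_ext => t.
  rewrite /Zev /ev_sau /ev_sa.
  by case: (projV U t.1 == u); case: (G t); case: (t.1.1 iS == s); case: (projV A t.1 == a).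
have [t0 _] : exists t0 : pt D * bool, true.
  case: (pickP (@predT (pt D * bool))) => [t0 _|H0]; first by exists t0.
  move: Om1; rewrite big_pred0; last exact: H0.
  by move/eqP; rewrite eq_sym oner_eq0.
have Hbound : forall (s : D iS) (a : DomV D A),
    fmin (fun u : DomV D U => condP (Delta Om) (ev_h h) (ev_sau s a u))
    <= condP (margXY Om) (ev_h h) (ev_sa s a) <=
    fmax (fun u : DomV D U => condP (Delta Om) (ev_h h) (ev_sau s a u)).
  move=> s a.
  have -> : condP (margXY Om) (ev_h h) (ev_sa s a) =
      (\sum_u Pr Om (fun t => h t.1.1 && Zev s a u t)) / \sum_u Pr Om (Zev s a u).
    rewrite /condP !Pmarg -(Hsplit s a (fun t => h t.1.1)) -(Hsplit s a xpredT).
    reflexivity.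
  apply: convex_bd.
  - by move=> u; apply: Pr_ge0.
  - move=> u /=.
    have Pc : 0 < Pr Om (fun t => t.2).
      apply: (lt_le_trans (Hpos s a u)); apply: Pr_sub => // t /andP[] //.
    have nzc : Pr Om (fun t => t.2) != 0 by rewrite gt_eqF.
    have cP := Hpos s a u.
    have nzc' : Pr Om (fun t => ev_sau s a u t.1 && t.2) != 0 by rewrite gt_eqF.
    have Hdiv : forall x y : R, y != 0 -> (x / Pr Om (fun t => t.2)) / (y / Pr Om (fun t => t.2)) = x / y.
      by move=> x y yn; field; apply/andP; split; [exact: yn | exact: nzc].
    rewrite /condP !PDelta Hdiv // mulrAC Hq mulfK //.
  - have Zp : 0 < Pr Om (Zev s a (projV U t0.1)).
      apply: (lt_le_trans (Hpos s a (projV U t0.1))); apply: Pr_sub => // t /andP[] //.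
    apply: (lt_le_trans Zp); rewrite (bigD1 (projV U t0.1)) //= lerDl.
    by apply: sumr_ge0 => u _; apply: Pr_ge0.
rewrite /fairness; split.
  by apply: mulr_ge0; [rewrite invr_ge0 | apply: sumr_ge0 => a _].
apply: ler_wpM2l; first by rewrite invr_ge0.
apply: ler_sum => a _.
rewrite ger0_norm; last by rewrite subr_ge0; exact: Hmon.
have /andP[_ H1] := Hbound s1 a.
have /andP[H0 _] := Hbound s0 a.
exact: lerB.
Qed.
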